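(* For a plane forest $\overline{\mathcal F}$ with $n$ vertices, let $\iota(\overline{\mathcal F})$ be the ordered forest obtained by numbering its vertices $1,\dots,n$ in order of first visit in a left depth-first (preorder) traversal of the trees from left to right. Then the linear map $\iota:\mathbf H_{NCK}\to\mathbf H_o$ is an injective morphism of Hopf algebras (equivalently, $\overline{\mathcal F}\mapsto S^{\iota(\overline{\mathcal F})}$ is a Hopf embedding of $\mathbf H_{NCK}$ into the polynomial realization of $\mathbf H_o$).
   Context: A plane forest is a finite sequence of plane trees (rooted trees in which the children of each vertex are linearly ordered). The noncommutative Connes–Kreimer algebra $\mathbf H_{NCK}$ has basis the plane forests, product = concatenation of sequences, and coproduct $\Delta(\overline{\mathcal F})=\sum_V\mathrm{Roo}_V\overline{\mathcal F}\otimes\mathrm{Lea}_V\overline{\mathcal F}$ over admissible cuts $V$ (sets of vertices no two of which are in ancestor/descendant relation), where $\mathrm{Lea}_V$ is the plane subforest formed by $V$ and its descendants and $\mathrm{Roo}_V$ the plane subforest formed by the remaining vertices, with inherited planar orders. An ordered forest on $n$ vertices is a rooted forest with vertex set $[n]$ (labels unrelated to the structure); $\mathbf H_o$ has basis the ordered forests, product $\mathcal F\mathcal G$ = disjoint union with labels of $\mathcal G$ shifted by the number of vertices of $\mathcal F$, and coproduct $\Delta(\mathcal F)=\sum_V\mathrm{Roo}_V\mathcal F\otimes\mathrm{Lea}_V\mathcal F$ over admissible cuts, where $\mathrm{Lea}_V\mathcal F$ (resp. $\mathrm{Roo}_V\mathcal F$) is the induced subforest on $V$ and its descendants (resp. on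 the complement), relabelled by the increasing bijection onto $[k]$. $S^{\mathcal F}$ denotes the polynomial realization of $\mathcal F$ (sum of $\mathcal F$-compatible words over $\{a_{ij}:0\le i<j\}$ with $a_{ij}\prec a_{kl}$ iff $j=k$, compatibility meaning $w_k\prec w_l$ whenever $k$ is the parent of $l$). *)

(* Defs.v *)
From HB Require Import structures.
From mathcomp Require Import all_boot all_order all_algebra.
Set Implicit Arguments. Unset Strict Implicit. Unset Printing Implicit Defensive.
Import GRing.Theory.
Local Open Scope ring_scope.

Inductive ptree := PNode of seq ptree.
Definition pforest := seq ptree.

Fixpoint ptree_enc (t : ptree) : GenTree.tree unit :=
  let: PNode ts := t in GenTree.Node 0 (map ptree_enc ts).

Fixpoint ptree_dec (g : GenTree.tree unit) : option ptree :=
  match g with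
  | GenTree.Leaf _ => None
  | GenTree.Node _ gs =>
    omap PNode
      ((fix decs (gs : seq (GenTree.tree unit)) : option (seq ptree) :=
          match gs with
          | [::] => Some [::]
          | g :: gs' =>
            match ptree_dec g, decs gs' with
            | Some t, Some ts => Some (t :: ts)
            | _, _ => None
            end
          end) gs)
  end.

Lemma ptree_encK : pcancel ptree_enc ptree_dec.
Proof.
rewrite /pcancel; fix IH 1; case=> ts /=.
suff -> : (fix decs (gs : seq (GenTree.tree unit)) : option (seq ptree) :=
          match gs with
          | [::] => Some [::]
          | g :: gs' =>
            match ptree_dec g, decs gs' with
            | Some t, Some ts => Some (t :: ts)
            | _, _ => None
            end
          end) (map ptree_enc ts) = Some ts by [].
move: ts; fix IHs 1; case=> [|u us] //=.
by rewrite IH IHs.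
Qed.

HB.instance Definition _ := Equality.copy ptree (pcan_type ptree_encK).

(* Vertices of a plane forest are addressed by paths: [:: i] is the root of
   the i-th tree, i :: j :: p the vertex at path j :: p inside ... etc.
   (p ++ [:: k] is the k-th child of the vertex p).  [pverts f] lists the
   vertices of f in left depth-first (preorder) order, trees left to right. *)
Fixpoint tverts (t : ptree) : seq (seq nat) :=
  let: PNode ts := t in
  [::] :: (fix fv (i : nat) (ts : seq ptree) : seq (seq nat) :=
             if ts is u :: us then map (cons i) (tverts u) ++ fv i.+1 us
             else [::]) 0%N ts.

Definition pverts (f : pforest) : seq (seq nat) :=
  flatten [seq map (cons i.1) (tverts i.2) | i <- zip (iota 0 (size f)) f].

(* The plane subforest induced on the set of vertices satisfying [keep]
   (paths relative to the tree), with inherited planar order: a deleted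
   vertex is replaced, in its place, by the induced subforest of its
   children. *)
Fixpoint tinduced (t : ptree) (keep : seq nat -> bool) : pforest :=
  let: PNode ts := t in
  let kids :=
    (fix fi (i : nat) (ts : seq ptree) : pforest :=
       if ts is u :: us then tinduced u (fun p => keep (i :: p)) ++ fi i.+1 us
       else [::]) 0%N ts in
  if keep [::] then [:: PNode kids] else kids.

Definition pinduced (f : pforest) (keep : seq nat -> bool) : pforest :=
  flatten [seq tinduced i.2 (fun p => keep (i.1 :: p))
          | i <- zip (iota 0 (size f)) f].

Fixpoint bitseqs (n : nat) : seq bitseq :=
  if n is n'.+1 then [seq b :: s | b <- [:: true; false], s <- bitseqs n']
  else [:: [::]].

(* admissible cut of a plane forest: no two of its vertices are in
   ancestor/descendant relation (v proper ancestor of w iff v is a proper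
   prefix of w) *)
Definition p_admissible (V : seq (seq nat)) : bool :=
  all (fun v => all (fun w => ~~ (prefix v w && (v != w))) V) V.

(* Lea_V : V and its descendants;  Roo_V : the remaining vertices *)
Definition p_inLea (V : seq (seq nat)) (p : seq nat) : bool :=
  has (fun v => prefix v p) V.

(* coproduct of H_NCK on a basis element: the list (multiset) of the
   terms Roo_V F (x) Lea_V F over all admissible cuts V *)
Definition pcoprod (f : pforest) : seq (pforest * pforest) :=
  [seq (pinduced f (fun p => ~~ p_inLea V p), pinduced f (p_inLea V))
  | V <- [seq mask m (pverts f) | m <- bitseqs (size (pverts f))]
  & p_admissible V].

Definition pprod (f g : pforest) : pforest := f ++ g.
Definition pcounit (f : pforest) : bool := f == [::].

(* An ordered forest on n vertices is encoded by its parent list p of size n: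
   the vertices are 0, ..., n-1 (standing for the labels 1, ..., n), and
   nth None p i is Some j if j is the parent of i, None if i is a root. *)
Definition oforest := seq (option nat).

Definition oparent (p : oforest) (o : option nat) : option nat :=
  obind (fun j => nth None p j) o.

Definition oanc (p : oforest) (a b : nat) : bool :=
  has (fun k => iter k (oparent p) (Some b) == Some a) (iota 1 (size p)).

Definition ovalid (p : oforest) : bool :=
  all (fun o => if o is Some j then (j < size p)%N else true) p &&
  all (fun i => iter (size p) (oparent p) (Some i) == None) (iota 0 (size p)).

Definition oprod (p q : oforest) : oforest :=
  p ++ map (omap (addn (size p))) q.
Definition ocounit (p : oforest) : bool := p == [::].

(* induced subforest on the vertex set S, relabelled by the increasing
   bijection S -> {0..|S|-1} *)
Definition oinduced (p : oforest) (S : pred nat) : oforest :=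
  [seq match nth None p j with
       | Some k => if S k then Some (count S (iota 0 k)) else None
       | None => None
       end
  | j <- iota 0 (size p) & S j].

(* admissible cut given by its indicator bit sequence m *)
Definition o_admissible (p : oforest) (m : bitseq) : bool :=
  all (fun i => all (fun j => ~~ (nth false m i && nth false m j && oanc p i j))
                    (iota 0 (size p))) (iota 0 (size p)).

Definition o_inLea (p : oforest) (m : bitseq) (i : nat) : bool :=
  nth false m i || has (fun a => nth false m a && oanc p a i) (iota 0 (size p)).

Definition ocoprod (p : oforest) : seq (oforest * oforest) :=
  [seq (oinduced p (predC (o_inLea p m)), oinduced p (o_inLea p m))
  | m <- bitseqs (size p) & o_admissible p m].

Definition iota_pf (f : pforest) : oforest :=
  let vs := pverts f in
  [seq if (1 < size v)%N then Some (index (take (size v).-1 v) vs) else None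
  | v <- vs].

(* An element of the free K-module on the basis B is represented by a
   finite formal sum, i.e. a list of (coefficient, basis element); two such
   represent the same vector iff all their coefficients agree. *)
Definition lc (K : Type) (B : Type) := seq (K * B).

Definition coef (K : nmodType) (B : eqType) (v : lc K B) (b : B) : K :=
  \sum_(x <- v | x.2 == b) x.1.

Definition lmap (K A B : Type) (f : A -> B) (v : lc K A) : lc K B :=
  [seq (x.1, f x.2) | x <- v].

Definition lmul (K : pzSemiRingType) (B : Type) (mul : B -> B -> B)
  (v w : lc K B) : lc K B :=
  [seq (x.1 * y.1, mul x.2 y.2) | x <- v, y <- w].

Definition lunit (K : pzSemiRingType) (B : Type) (e : B) : lc K B := [:: (1, e)].

Definition lcoprod (K B : Type) (D : B -> seq (B * B)) (v : lc K B)
  : lc K (B * B) :=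
  [seq (x.1, y) | x <- v, y <- D x.2].

Definition lcounit (K : pzSemiRingType) (B : Type) (eps : B -> bool)
  (v : lc K B) : K :=
  \sum_(x <- v) x.1 * (eps x.2)%:R.

Definition tensor_map (A B : Type) (f : A -> B) (x : A * A) : B * B :=
  (f x.1, f x.2).

(* Main.v *)
Require Import Defs.
From HB Require Import structures.
From mathcomp Require Import all_boot all_order all_algebra.
Set Implicit Arguments. Unset Strict Implicit. Unset Printing Implicit Defensive.

Definition shiftp (k : nat) (v : seq nat) : seq nat :=
  if v is i :: w then (k + i)%N :: w else [::].

Definition PV (j : nat) (g : pforest) : seq (seq nat) :=
  flatten [seq map (cons i.1) (tverts i.2) | i <- zip (iota j (size g)) g].
Definition PI (j : nat) (g : pforest) (keep : seq nat -> bool) : pforest :=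
  flatten [seq tinduced i.2 (fun p => keep (i.1 :: p)) | i <- zip (iota j (size g)) g].

Lemma PV_cons j t g : PV j (t :: g) = map (cons j) (tverts t) ++ PV j.+1 g.
Proof. by []. Qed.
Lemma PI_cons j t g keep :
  PI j (t :: g) keep = tinduced t (fun p => keep (j :: p)) ++ PI j.+1 g keep.
Proof. by []. Qed.

Lemma PV_shift k j g : PV (k + j) g = map (shiftp k) (PV j g).
Proof.
elim: g j => [|t g IH] j //=.
rewrite !PV_cons map_cat -addnS IH -map_comp; congr (_ ++ _).
Qed.

Lemma PI_shift k j g keep : PI (k + j) g keep = PI j g (fun p => keep (shiftp k p)).
Proof. by elim: g j => [|t g IH] j //=; rewrite !PI_cons -addnS IH. Qed.

Lemma tverts_node ts : tverts (PNode ts) = [::] :: pverts ts.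
Proof.
rewrite /=; congr cons; rewrite /pverts -/(PV 0 ts).
elim: ts 0%N => [|t ts IH] i //=.
by rewrite PV_cons IH.
Qed.

Lemma tinduced_node ts keep : tinduced (PNode ts) keep =
  if keep [::] then [:: PNode (pinduced ts keep)] else pinduced ts keep.
Proof.
rewrite /=.
suff -> : (fix fi (i : nat) (ts : seq ptree) : pforest :=
       if ts is u :: us then tinduced u (fun p => keep (i :: p)) ++ fi i.+1 us
       else [::]) 0%N ts = pinduced ts keep by [].
rewrite /pinduced -/(PI 0 ts keep).
by elim: ts 0%N => [|t ts IH] i //=; rewrite PI_cons IH.
Qed.

Lemma pverts_cons ts rest : pverts (PNode ts :: rest) =
  [:: 0%N] :: map (cons 0%N) (pverts ts) ++ map (shiftp 1) (pverts rest).
Proof.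
rewrite /pverts -/(PV 0 _) PV_cons tverts_node -/(PV 0 _).
by rewrite -(PV_shift 1 0).
Qed.

Lemma pforest_ind (P : pforest -> Prop) :
  P [::] -> (forall ts rest, P ts -> P rest -> P (PNode ts :: rest)) ->
  forall f, P f.
Proof.
move=> H0 Hc f; have [n] := ubnP (size (pverts f)); elim: n f => // n IH.
case=> [|[ts] rest] //; rewrite pverts_cons /= size_cat !size_map ltnS => Hn.
apply: Hc; apply: IH; apply: leq_ltn_trans Hn; [exact: leq_addr| exact: leq_addl].
Qed.

Lemma pinduced_cons ts rest keep : pinduced (PNode ts :: rest) keep =
  (if keep [:: 0%N] then [:: PNode (pinduced ts (fun p => keep (0%N :: p)))]
   else pinduced ts (fun p => keep (0%N :: p)))
  ++ pinduced rest (fun p => keep (shiftp 1 p)).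
Proof.
rewrite /pinduced -!/(PI 0 _ _) PI_cons tinduced_node.
by have := PI_shift 1 0 rest keep; rewrite addn0 => ->.
Qed.

Lemma PV_cat j f g : PV j (f ++ g) = PV j f ++ PV (j + size f) g.
Proof.
elim: f j => [|t f IH] j /=; first by rewrite addn0.
by rewrite !PV_cons IH catA addSnnS.
Qed.

Lemma PI_cat j f g keep : PI j (f ++ g) keep = PI j f keep ++ PI (j + size f) g keep.
Proof.
elim: f j => [|t f IH] j /=; first by rewrite addn0.
by rewrite !PI_cons IH catA addSnnS.
Qed.

Lemma pverts_cat f g : pverts (f ++ g) = pverts f ++ map (shiftp (size f)) (pverts g).
Proof.
rewrite /pverts -/(PV 0 (f ++ g)) -/(PV 0 f) -/(PV 0 g) PV_cat add0n.
by have := PV_shift (size f) 0 g; rewrite addn0 => ->.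
Qed.

Lemma pinduced_cat f g keep : pinduced (f ++ g) keep =
  pinduced f keep ++ pinduced g (fun p => keep (shiftp (size f) p)).
Proof.
rewrite /pinduced -/(PI 0 (f ++ g) keep) -/(PI 0 f keep) PI_cat add0n.
by have := PI_shift (size f) 0 g keep; rewrite addn0 => ->.
Qed.

Lemma pverts_nil f : (pverts f == [::]) = (f == [::]).
Proof. by case: f => [|[ts] rest]; rewrite ?pverts_cons. Qed.

Lemma pverts_head f v : v \in pverts f -> exists i w, v = i :: w /\ (i < size f)%N.
Proof.
elim/pforest_ind: f v => // ts rest IH1 IH2 v; rewrite pverts_cons inE mem_cat.
case/or3P.
- by move/eqP->; exists 0%N, [::].
- by case/mapP=> u _ ->; exists 0%N, u.
- case/mapP=> u /IH2 [i [w [-> Hi]]] ->; by exists (1 + i)%N, w; split; rewrite //= add1n ltnS.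
Qed.

Lemma shiftp_inj k : injective (shiftp k).
Proof. by move=> [|i v] [|j w] //= [/addnI -> ->]. Qed.

Lemma notin_shift1 (A : seq (seq nat)) v : (0%N :: v) \notin map (shiftp 1) A.
Proof. by apply/mapP => -[[|x w] _] //. Qed.

Lemma pverts_uniq f : uniq (pverts f).
Proof.
elim/pforest_ind: f => // ts rest IH1 IH2; rewrite pverts_cons cons_uniq cat_uniq.
rewrite (map_inj_uniq (@shiftp_inj 1)) IH2 (map_inj_uniq (fun x y (h : (0%N :: x) = 0%N :: y) => congr1 behead h)) IH1.
rewrite mem_cat (negbTE (notin_shift1 _ _)) orbF andbT /=; apply/andP; split.
  by apply/mapP => -[u /pverts_head [i [w [-> _]]]].
by apply/hasP => -[x /mapP [u /pverts_head [i [w [-> _]]] ->] /mapP [z _]]; rewrite /= add1n.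
Qed.

Lemma pverts_nonnil f v : v \in pverts f -> v != [::].
Proof. by case/pverts_head=> i [w [-> _]]. Qed.

Lemma take_shiftp k m v : take m (shiftp k v) = shiftp k (take m v).
Proof. by case: v m => [|i v] [|m]. Qed.

Lemma pverts_take f v m : v \in pverts f -> (0 < m)%N -> take m v \in pverts f.
Proof.
elim/pforest_ind: f v m => // ts rest IH1 IH2 v m; rewrite pverts_cons inE mem_cat.
move=> H; case: m => // m _; case/or3P: H.
- by move/eqP->; rewrite inE eqxx.
- case/mapP=> u uin ->; case: m => [|m]; first by rewrite /= take0 inE eqxx.
  by rewrite /= inE mem_cat map_f ?orbT // IH1.
- case/mapP=> u uin ->; rewrite take_shiftp inE mem_cat map_f ?orbT //.
  exact: IH2.
Qed.

Lemma pverts_size f v : v \in pverts f -> (size v <= size (pverts f))%N.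
Proof.
move=> vin; have <- : size (map (fun m => take m v) (iota 1 (size v))) = size v.
  by rewrite size_map size_iota.
apply: uniq_leq_size.
  rewrite map_inj_in_uniq ?iota_uniq // => a b; rewrite !mem_iota => /andP[a1 a2] /andP[b1 b2].
  move=> /(congr1 size); rewrite !size_takel //; rewrite add1n ltnS in a2 b2 => //.
move=> x /mapP [k]; rewrite mem_iota => /andP[k1 _] ->; exact: pverts_take.
Qed.

Definition parentp (v : seq nat) : option (seq nat) :=
  if (1 < size v)%N then Some (take (size v).-1 v) else None.

Lemma iota_pfE f :
  iota_pf f = [seq omap (fun u => index u (pverts f)) (parentp v) | v <- pverts f].
Proof. by rewrite /iota_pf; apply: eq_map => v; rewrite /parentp; case: ifP. Qed.

Lemma size_iota_pf f : size (iota_pf f) = size (pverts f).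
Proof. by rewrite size_map. Qed.

Lemma parentp_in f v u : v \in pverts f -> parentp v = Some u -> u \in pverts f.
Proof.
rewrite /parentp; case: ifP => // H vin [<-]; apply: pverts_take => //.
by case: (size v) H => // [[]].
Qed.

Lemma nth_iota_pf f j : (j < size (pverts f))%N ->
  nth None (iota_pf f) j = omap (index^~ (pverts f)) (parentp (nth [::] (pverts f) j)).
Proof. by move=> H; rewrite iota_pfE (nth_map [::]). Qed.

Lemma oparent_index f u : u \in pverts f ->
  oparent (iota_pf f) (Some (index u (pverts f))) = omap (index^~ (pverts f)) (parentp u).
Proof. by move=> uin; rewrite /= nth_iota_pf ?index_mem // nth_index. Qed.

Lemma iter_parent f v k : v \in pverts f ->
  iter k (oparent (iota_pf f)) (Some (index v (pverts f))) =
  if (k < size v)%N then Some (index (take (size v - k) v) (pverts f)) else None.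
Proof.
move=> vin; have vn := pverts_nonnil vin.
elim: k => [|k IH]; first by rewrite subn0 take_size; case: v vin vn.
rewrite iterS IH; case: (ltnP k (size v)) => Hk; last first.
  by rewrite ltnNge (leq_trans Hk) ?leqnSn.
have uin : take (size v - k) v \in pverts f by apply: pverts_take => //; rewrite subn_gt0.
rewrite oparent_index // /parentp size_takel ?leq_subr //.
case: (ltnP k.+1 (size v)) => Hk1.
  rewrite -subnS ltn_subRL addn1 Hk1 /= take_takel //.
  by apply: leq_sub2l.
have -> : (size v - k = 1)%N.
  have -> : size v = k.+1 by apply/eqP; rewrite eqn_leq Hk1 Hk.
  by rewrite subSnn.
by [].
Qed.

Lemma nth_vs_index f u : u \in pverts f -> nth [::] (pverts f) (index u (pverts f)) = u.
Proof. exact: nth_index. Qed.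

Lemma oanc_iota f i j : (i < size (pverts f))%N -> (j < size (pverts f))%N ->
  oanc (iota_pf f) i j =
  prefix (nth [::] (pverts f) i) (nth [::] (pverts f) j) &&
  (nth [::] (pverts f) i != nth [::] (pverts f) j).
Proof.
move=> Hi Hj; set vs := pverts f; set u := nth [::] vs i; set v := nth [::] vs j.
have uin : u \in vs by apply: mem_nth.
have vin : v \in vs by apply: mem_nth.
have Ej : j = index v vs by rewrite index_uniq // pverts_uniq.
have Ei : i = index u vs by rewrite index_uniq // pverts_uniq.
rewrite /oanc size_iota_pf Ej; apply/hasP/andP.
  case=> k; rewrite mem_iota add1n ltnS => /andP[k1 kn].
  rewrite iter_parent //; case: ifP => // kv /eqP [].
  rewrite Ei => /(congr1 (nth [::] vs)); rewrite !nth_index //; last first.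
    by apply: pverts_take => //; rewrite subn_gt0.
  move=> <-; split; first exact: prefix_take.
  apply/negP => /eqP /(congr1 size); rewrite size_takel ?leq_subr //.
  move=> E; move: (ltn_subrL k (size v)); rewrite E ltnn k1 /=.
  by move=> H; move: (leq_ltn_trans (leq0n k) kv); rewrite -H.
case=> pre neq; have su : (size u < size v)%N.
  rewrite ltn_neqAle size_prefix // andbT; apply: contra neq => /eqP E.
  by move: pre; rewrite prefixE E take_size eq_sym.
exists (size v - size u)%N.
  rewrite mem_iota add1n ltnS subn_gt0 su /=.
  apply: leq_trans (leq_subr _ _) (pverts_size vin).
rewrite /vs iter_parent // -/vs ifT; last first.
  by rewrite ltn_subrL (leq_ltn_trans (leq0n _) su) andbT lt0n size_eq0 (pverts_nonnil uin).
rewrite subKn; last exact: ltnW.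
move: pre; rewrite prefixE => /eqP ->.
by rewrite -Ei.
Qed.

Lemma ovalid_iota f : ovalid (iota_pf f).
Proof.
rewrite /ovalid size_iota_pf; apply/andP; split.
  apply/allP => o; rewrite iota_pfE => /mapP [v vin ->].
  case E: (parentp v) => [u|] //=; rewrite index_mem; exact: parentp_in E.
apply/allP => i; rewrite mem_iota add0n => /andP[_ Hi].
have vin : nth [::] (pverts f) i \in pverts f by apply: mem_nth.
have Ei : index (nth [::] (pverts f) i) (pverts f) = i by rewrite index_uniq // pverts_uniq.
by rewrite -{1}Ei iter_parent // ltnNge pverts_size.
Qed.


Fixpoint nkaT (keep : seq nat -> bool) (v : seq nat) : option (seq nat) :=
  match v with
  | [::] => None
  | x :: v' => match nkaT (fun p => keep (x :: p)) v' with
               | Some u => Some (x :: u)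
               | None => if keep [::] then Some [::] else None
               end
  end.

Definition nkaF (keep : seq nat -> bool) (v : seq nat) : option (seq nat) :=
  if v is x :: v' then omap (cons x) (nkaT (fun p => keep (x :: p)) v') else None.

Lemma nkaT_true (keep : seq nat -> bool) v : keep [::] -> v != [::] ->
  nkaT keep v = Some (odflt [::] (nkaF keep v)).
Proof. by case: v => // x v /= ->; case: nkaT. Qed.

Lemma nkaT_false (keep : seq nat -> bool) v : ~~ keep [::] -> nkaT keep v = nkaF keep v.
Proof. by case: v => // x v /= /negbTE ->; case: nkaT. Qed.

Lemma nkaF_shift (keep : seq nat -> bool) w :
  nkaF keep (shiftp 1 w) = omap (shiftp 1) (nkaF (fun p => keep (shiftp 1 p)) w).
Proof. by case: w => //= x w; case: nkaT. Qed.

Lemma nkaF_nonnil (keep : seq nat -> bool) v u : nkaF keep v = Some u -> u != [::].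
Proof. by case: v => //= x v; case: nkaT => // ? [<-]. Qed.

Lemma parentp_shift k x : parentp (shiftp k x) = omap (shiftp k) (parentp x).
Proof.
rewrite /parentp; have -> : size (shiftp k x) = size x by case: x.
by case: ifP => //; rewrite take_shiftp.
Qed.

Lemma parentp_cons0 w : w != [::] ->
  parentp (0%N :: w) = Some (0%N :: odflt [::] (parentp w)).
Proof.
rewrite /parentp /=; case: w => // a w _ /=.
by case: w => //= b w; rewrite ltnS.
Qed.


Lemma filter_cons0 (keep : seq nat -> bool) X :
  filter keep (map (cons 0%N) X) = map (cons 0%N) (filter (fun p => keep (0%N :: p)) X).
Proof. by rewrite filter_map. Qed.

Lemma filter_shift1 (keep : seq nat -> bool) X :
  filter keep (map (shiftp 1) X) = map (shiftp 1) (filter (fun p => keep (shiftp 1 p)) X).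
Proof. by rewrite filter_map. Qed.

Lemma induced_map f (keep : seq nat -> bool) : exists psi,
  pverts (pinduced f keep) = map psi (filter keep (pverts f)) /\
  {in filter keep (pverts f), forall v, parentp (psi v) = omap psi (nkaF keep v)}.
Proof.
elim/pforest_ind: f keep => [|ts rest IH1 IH2] keep; first by exists id.
have [psi0 [E0 P0]] := IH1 (fun p => keep (0%N :: p)).
have [psi1 [E1 P1]] := IH2 (fun p => keep (shiftp 1 p)).
set A := (if keep [:: 0%N] then [:: PNode (pinduced ts (fun p => keep (0%N :: p)))]
          else pinduced ts (fun p => keep (0%N :: p))).
pose psi (v : seq nat) := match v with
  | 0 :: u => if u is [::] then [:: 0%N] else
               (if keep [:: 0%N] then 0%N :: psi0 u else psi0 u)
  | i.+1 :: u => shiftp (size A) (psi1 (i :: u))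
  | [::] => [::] end.
exists psi; rewrite pinduced_cons -/A pverts_cat pverts_cons [filter _ (_ :: _)]/= filter_cat filter_cons0 filter_shift1.
set F0 := filter _ (pverts ts); set F1 := filter _ (pverts rest).
have F0n : {in F0, forall u, u != [::]}.
  by move=> u; rewrite mem_filter => /andP[_ /pverts_nonnil].
have F1n : {in F1, forall u, u != [::]}.
  by move=> u; rewrite mem_filter => /andP[_ /pverts_nonnil].
have M1 : map psi (map (shiftp 1) F1) = map (shiftp (size A)) (map psi1 F1).
  rewrite -!map_comp; apply/eq_in_map => -[|i w] /F1n //= _.
have M0 : map psi (map (cons 0%N) F0) =
    map (fun u => if keep [:: 0%N] then 0%N :: psi0 u else psi0 u) F0.
  by rewrite -map_comp; apply/eq_in_map => -[|i w] /F0n.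
split.
  rewrite E1 -/F1; case K: (keep [:: 0%N]) => /=; rewrite map_cat M1 M0 K.
    by rewrite /A K pverts_cons /= cats0 E0 -/F0 -map_comp.
  by rewrite /A K E0.
have PS1 z : z != [::] -> psi (shiftp 1 z) = shiftp (size A) (psi1 z).
  by case: z => // i z.
have PS0 z : z != [::] -> psi (0%N :: z) = if keep [:: 0%N] then 0%N :: psi0 z else psi0 z.
  by case: z.
have psi0n u : u \in F0 -> psi0 u != [::].
  by move=> uin; apply: (@pverts_nonnil (pinduced ts (fun p => keep (0%N :: p)))); rewrite E0 map_f.
have shiftcase : forall w, w \in F1 -> parentp (psi (shiftp 1 w)) = omap psi (nkaF keep (shiftp 1 w)).
  move=> w win; rewrite PS1 ?F1n // parentp_shift P1 // nkaF_shift.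
  by case E: (nkaF _ w) => [z|] //=; rewrite PS1 // (nkaF_nonnil E).
move=> v; case K: (keep [:: 0%N]); rewrite ?inE mem_cat.
  case/or3P.
  - by move/eqP ->.
  - case/mapP=> u uin ->; rewrite PS0 ?F0n // K parentp_cons0 ?psi0n // P0 //.
    rewrite /= nkaT_true ?F0n //=.
    by case E: (nkaF (fun p => keep (0%N :: p)) u) => [z|] /= //; case: z E => [|a z] E; [by move: (nkaF_nonnil E) | by rewrite K].
  - by case/mapP=> w win ->; apply: shiftcase.
case/orP.
  case/mapP=> u uin ->; rewrite PS0 ?F0n // K P0 //.
  rewrite /= nkaT_false ?K //.
  by case E: (nkaF (fun p => keep (0%N :: p)) u) => [z|] /= //; case: z E => [|a z] E; [by move: (nkaF_nonnil E) | by rewrite K].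
by case/mapP=> w win ->; apply: shiftcase.
Qed.


Lemma nkaT_cons (keep : seq nat -> bool) x v : nkaT keep (x :: v) =
  match nkaT (fun p => keep (x :: p)) v with
  | Some u => Some (x :: u)
  | None => if keep [::] then Some [::] else None
  end.
Proof. by []. Qed.

Lemma nkaF_cons (keep : seq nat -> bool) x v :
  nkaF keep (x :: v) = omap (cons x) (nkaT (fun p => keep (x :: p)) v).
Proof. by []. Qed.

Lemma NT1 (keep : seq nat -> bool) v : (0 < size v)%N -> keep (take (size v).-1 v) ->
  nkaT keep v = Some (take (size v).-1 v).
Proof.
elim: v keep => // x v IH keep _.
case: v IH => [|y v] IH; first by rewrite /= ?take0 => ->.
by move=> H; rewrite nkaT_cons (IH (fun p => keep (x :: p))).
Qed.

Lemma NT2 (keep : seq nat -> bool) v : (forall k, (k < size v)%N -> ~~ keep (take k v)) ->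
  nkaT keep v = None.
Proof.
elim: v keep => // x v IH keep H /=.
rewrite IH; last by move=> k Hk; exact: (H k.+1).
by have := H 0%N isT; rewrite take0 => /negbTE ->.
Qed.

Lemma NK1 (keep : seq nat -> bool) v : (1 < size v)%N -> keep (take (size v).-1 v) ->
  nkaF keep v = Some (take (size v).-1 v).
Proof.
case: v => // x [|y v] // _ H2.
by rewrite nkaF_cons (@NT1 (fun p => keep (x :: p))).
Qed.

Lemma NK2 (keep : seq nat -> bool) v :
  (forall k, (0 < k < size v)%N -> ~~ keep (take k v)) -> nkaF keep v = None.
Proof.
case: v => // x v H; rewrite nkaF_cons NT2 // => k Hk; exact: (H k.+1).
Qed.

Lemma index_map_in (T U : eqType) (psi : T -> U) (s : seq T) u :
  uniq (map psi s) -> u \in s -> index (psi u) (map psi s) = index u s.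
Proof.
elim: s => //= x s IH /andP[nx us]; rewrite inE.
case: eqVneq => [-> _|ne /= us']; first by rewrite !eqxx.
rewrite IH //; case: eqVneq => [E|_] //.
by move: nx; rewrite E map_f.
Qed.

Lemma index_filter (T : eqType) (keep : pred T) (s : seq T) u : keep u ->
  index u (filter keep s) = count keep (take (index u s) s).
Proof.
move=> ku; elim: s => //= x s IH.
have [->|ne] := eqVneq x u; first by rewrite ku /= eqxx.
case kx: (keep x) => /=; last by rewrite IH kx.
case: ifP => [/eqP E|_]; last by rewrite IH kx.
by move: ne; rewrite E eqxx.
Qed.

Lemma map_nth_iota (T : Type) (x0 : T) (s : seq T) k : (k <= size s)%N ->
  map (nth x0 s) (iota 0 k) = take k s.
Proof.
move=> H; rewrite -{2}(mkseq_nth x0 s) /mkseq -map_take take_iota.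
by rewrite (minn_idPl H).
Qed.

Lemma induced_iota f (keep : seq nat -> bool) :
  (forall v, v \in pverts f -> keep v ->
     nkaF keep v = if parentp v is Some u then (if keep u then Some u else None) else None) ->
  iota_pf (pinduced f keep) = oinduced (iota_pf f) (fun j => keep (nth [::] (pverts f) j)).
Proof.
move=> HC; have [psi [E P]] := induced_map f keep.
set vs := pverts f in HC P E *; set K := filter keep vs in P E *.
have Ku : uniq (map psi K) by rewrite -E pverts_uniq.
rewrite iota_pfE E -map_comp /oinduced size_iota_pf -/vs.
have EK : K = map (nth [::] vs) (filter (fun j => keep (nth [::] vs j)) (iota 0 (size vs))).
  by rewrite /K -{1}(mkseq_nth [::] vs) /mkseq filter_map.
rewrite {2}EK -map_comp; apply/eq_in_map => j; rewrite mem_filter mem_iota add0n => /andP[kj Hj] /=.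
set v := nth [::] vs j in kj *.
have vin : v \in vs by apply: mem_nth.
have vK : v \in K by rewrite mem_filter kj.
rewrite P // HC // (nth_iota_pf Hj) -/vs -/v.
case E2: (parentp v) => [u|] //=.
have uin : u \in vs by apply: parentp_in E2.
rewrite nth_index //.
case ku: (keep u) => //=; congr Some.
have uK : u \in K by rewrite mem_filter ku.
rewrite index_map_in // /K index_filter // -(map_nth_iota [::]) ?count_map //.
by rewrite ltnW // index_mem.
Qed.


Lemma bitseqs_size n m : m \in bitseqs n -> size m = n.
Proof.
elim: n m => [|n IH] m /=; first by rewrite inE => /eqP ->.
rewrite ?cats0 mem_cat => /orP[] /mapP [s /IH <- ->] //.
Qed.

Section Cut.
Variable f : pforest.
Variable m : bitseq.
Local Notation vs := (pverts f).
Local Notation V := (mask m vs).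
Local Notation p := (iota_pf f).

Lemma inV v : (v \in V) = (v \in vs) && nth false m (index v vs).
Proof. by rewrite in_mask // pverts_uniq. Qed.

Lemma adm_iota : o_admissible p m = p_admissible V.
Proof.
rewrite /o_admissible /p_admissible size_iota_pf; apply/idP/idP => H.
  apply/allP => v; rewrite inV => /andP[vin mv]; apply/allP => w; rewrite inV => /andP[win mw].
  have := allP H (index v vs); rewrite mem_iota index_mem vin => /(_ isT) /allP /(_ (index w vs)).
  rewrite mem_iota index_mem win => /(_ isT).
  by rewrite oanc_iota ?index_mem // !nth_index // mv mw.
apply/allP => i; rewrite mem_iota add0n => /andP[_ Hi].
apply/allP => j; rewrite mem_iota add0n => /andP[_ Hj].
rewrite oanc_iota //; apply/negP => /andP[/andP[mi mj] pr].
have vV : nth [::] vs i \in V by rewrite inV mem_nth // index_uniq // pverts_uniq.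
have wV : nth [::] vs j \in V by rewrite inV mem_nth // index_uniq // pverts_uniq.
by have := allP (allP H _ vV) _ wV; rewrite pr.
Qed.

Lemma lea_iota i : (i < size vs)%N -> o_inLea p m i = p_inLea V (nth [::] vs i).
Proof.
move=> Hi; rewrite /o_inLea /p_inLea size_iota_pf; apply/idP/idP.
  case/orP => [mi|/hasP [a]].
    apply/hasP; exists (nth [::] vs i); last exact: prefix_refl.
    by rewrite inV mem_nth // index_uniq // pverts_uniq.
  rewrite mem_iota add0n => /andP[_ Ha] /andP[ma]; rewrite oanc_iota // => /andP[pr _].
  apply/hasP; exists (nth [::] vs a) => //.
  by rewrite inV mem_nth // index_uniq // pverts_uniq.
case/hasP => v; rewrite inV => /andP[vin mv] pr.
have [E|ne] := eqVneq v (nth [::] vs i).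
  by move: mv; rewrite E index_uniq ?pverts_uniq // => ->.
apply/orP; right; apply/hasP; exists (index v vs).
  by rewrite mem_iota add0n index_mem vin.
by rewrite mv oanc_iota ?index_mem // nth_index // pr.
Qed.

End Cut.

Lemma p_inLea_prefix (V : seq (seq nat)) (x y : seq nat) : prefix x y -> p_inLea V x -> p_inLea V y.
Proof.
move=> pxy /hasP [v vV pvx]; apply/hasP; exists v => //; exact: prefix_trans pvx pxy.
Qed.

Lemma prefix_parent (v : seq nat) k : (k <= (size v).-1)%N -> prefix (take k v) (take (size v).-1 v).
Proof. by move=> H; rewrite -(take_takel _ H); apply: prefix_take. Qed.

Lemma condR f (V : seq (seq nat)) v : v \in pverts f -> ~~ p_inLea V v ->
  nkaF (fun x => ~~ p_inLea V x) v =
  if parentp v is Some u then (if ~~ p_inLea V u then Some u else None) else None.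
Proof.
move=> vin kv; rewrite /parentp; case: ifP => H.
  have ku : ~~ p_inLea V (take (size v).-1 v).
    by apply: contra kv; apply: p_inLea_prefix; apply: prefix_take.
  by rewrite ku NK1.
apply: NK2 => k /andP [k0 kv']; move: H; rewrite (leq_trans _ kv') //.
Qed.

Lemma condL f (V : seq (seq nat)) v : v \in pverts f -> p_inLea V v ->
  nkaF (p_inLea V) v =
  if parentp v is Some u then (if p_inLea V u then Some u else None) else None.
Proof.
move=> vin kv; rewrite /parentp; case: ifP => H; last first.
  apply: NK2 => k /andP [k0 kv']; move: H; rewrite (leq_trans _ kv') //.
case ku: (p_inLea V (take (size v).-1 v)); first by rewrite NK1.
apply: NK2 => k /andP [k0 kv']; apply/negP => kk.
move/negbT: ku => /negP; apply; apply: p_inLea_prefix kk.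
by apply: prefix_parent; rewrite -ltnS; case: (size v) kv' H.
Qed.


Lemma oinduced_ext f (S S' : pred nat) :
  (forall j, (j < size (pverts f))%N -> S j = S' j) ->
  oinduced (iota_pf f) S = oinduced (iota_pf f) S'.
Proof.
move=> H; rewrite /oinduced size_iota_pf.
have -> : filter S (iota 0 (size (pverts f))) = filter S' (iota 0 (size (pverts f))).
  by apply: eq_in_filter => j; rewrite mem_iota add0n => /andP[_ /H].
apply/eq_in_map => j; rewrite mem_filter mem_iota add0n => /andP[_ /andP[_ Hj]].
rewrite nth_iota_pf //; case E: (parentp _) => [u|] //=.
have uin : u \in pverts f by apply: parentp_in E; apply: mem_nth.
have Hk : (index u (pverts f) < size (pverts f))%N by rewrite index_mem.
rewrite H //; congr (if _ then Some _ else _).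
by apply: eq_in_count => k; rewrite mem_iota add0n => /andP[_ Hk']; apply: H; apply: ltn_trans Hk.
Qed.

Lemma coprod_iota f : ocoprod (iota_pf f) = map (tensor_map iota_pf) (pcoprod f).
Proof.
rewrite /ocoprod /pcoprod size_iota_pf filter_map -!map_comp.
have -> : filter (o_admissible (iota_pf f)) (bitseqs (size (pverts f))) =
          filter (preim (mask^~ (pverts f)) p_admissible) (bitseqs (size (pverts f))).
  by apply: eq_in_filter => m _; rewrite /= adm_iota.
apply/eq_in_map => m _; rewrite /tensor_map /=; congr pair.
  rewrite induced_iota; last by move=> v vin kv; apply: (condR vin).
  by apply: oinduced_ext => j Hj; rewrite /= lea_iota.
rewrite induced_iota; last by move=> v vin kv; apply: (condL vin).
by apply: oinduced_ext => j Hj; rewrite /= lea_iota.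
Qed.

Lemma prod_iota f g : iota_pf (f ++ g) = oprod (iota_pf f) (iota_pf g).
Proof.
rewrite /oprod size_iota_pf !iota_pfE pverts_cat map_cat; congr (_ ++ _).
  apply/eq_in_map => v vin; case E: (parentp v) => [u|] //=.
  by rewrite index_cat (parentp_in vin E).
rewrite -!map_comp; apply/eq_in_map => w win /=.
rewrite parentp_shift; case E: (parentp w) => [u|] //=.
have uin := parentp_in win E.
rewrite index_cat ifF ?(index_map (@shiftp_inj _)) //.
apply/negP => /pverts_head [i [x [Ex Hi]]].
have [j [y [Ey _]]] := pverts_head uin.
by move: Ex Hi; rewrite Ey /= => -[<- _]; rewrite ltnNge leq_addr.
Qed.

Definition liftp (o : option nat) : option nat :=
  Some (if o is Some j then j.+1 else 0%N).

Lemma iota_single ts : iota_pf [:: PNode ts] = None :: map liftp (iota_pf ts).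
Proof.
rewrite !iota_pfE.
have -> : pverts [:: PNode ts] = [:: 0%N] :: map (cons 0%N) (pverts ts).
  by rewrite pverts_cons /= cats0.
rewrite /= -map_comp; congr cons; rewrite -map_comp.
apply/eq_in_map => w win /=.
rewrite parentp_cons0 ?(pverts_nonnil win) //=.
case E: (parentp w) => [u|] //=.
have uin := parentp_in win E.
rewrite (index_map (fun x y (h : (0%N :: x) = 0%N :: y) => congr1 behead h)).
by rewrite eqseq_cons eqxx /= eq_sym (negbTE (pverts_nonnil uin)).
Qed.

Lemma iota_cons ts rest :
  iota_pf (PNode ts :: rest) = oprod (None :: map liftp (iota_pf ts)) (iota_pf rest).
Proof. by rewrite -iota_single -prod_iota. Qed.

Lemma iota_nil f : (iota_pf f == [::]) = (f == [::]).
Proof. by rewrite -size_eq0 size_iota_pf size_eq0 pverts_nil. Qed.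

Lemma find_none X (Y : seq (option nat)) c :
  (Y = [::] \/ exists Y', Y = None :: Y') ->
  find (fun o => o == None) (map liftp X ++ map (omap (addn c)) Y) = size X.
Proof.
move=> HY; rewrite find_cat ifF; last by apply/hasP => -[o /mapP [x _ ->]].
rewrite size_map; case: HY => [->|[Y' ->]] /=; by rewrite addn0.
Qed.

Lemma iota_head f : f = [::] \/ exists Y', iota_pf f = None :: Y'.
Proof. case: f => [|[ts] rest]; [by left | right]; rewrite iota_cons; by eexists. Qed.

Lemma liftp_inj : injective liftp.
Proof. by move=> [a|] [b|] //= [] // ->. Qed.

Lemma omap_add_inj c : injective (omap (addn c)).
Proof. by move=> [a|] [b|] //= [] /addnI ->. Qed.

Lemma iota_inj : injective iota_pf.
Proof.
move=> f; elim/pforest_ind: f => [|ts rest IH1 IH2] g.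
  by move=> /esym /eqP; rewrite iota_nil => /eqP.
case: g => [|[us] rest']; first by move/eqP; rewrite iota_nil.
rewrite !iota_cons /oprod /= => -[E].
have HY f' : iota_pf f' = [::] \/ exists Y', iota_pf f' = None :: Y'.
  by case: (iota_head f') => [->|]; [left|right].
have S : size (iota_pf ts) = size (iota_pf us).
  rewrite -(@find_none (iota_pf ts) (iota_pf rest) (size (map liftp (iota_pf ts))).+1 (HY rest)).
  by rewrite E (find_none _ _ (HY rest')).
move: E; rewrite !size_map -!size_iota_pf S => /eqP; rewrite eqseq_cat ?size_map //.
case/andP => /eqP /(inj_map liftp_inj) /IH1 -> /eqP /(inj_map (@omap_add_inj _)) /IH2 ->.
  by [].
by rewrite -!size_iota_pf S.
Qed.

Import GRing.Theory.
Local Open Scope ring_scope.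

Lemma coef_lmap (K : fieldType) (A B : eqType) (h : A -> B) (v : lc K A) (b : B) :
  coef (lmap h v) b = \sum_(x <- v | h x.2 == b) x.1.
Proof. by rewrite /coef /lmap big_map. Qed.

Lemma coef_part (K : fieldType) (A B : eqType) (h : A -> B) (v : lc K A) (b : B) (S : seq A) :
  uniq S -> {subset map snd v <= S} ->
  \sum_(x <- v | h x.2 == b) x.1 = \sum_(a <- S | h a == b) coef v a.
Proof.
move=> uS; elim: v => [|y v IH] sub.
  by rewrite big_nil big1 // => a _; rewrite /coef big_nil.
rewrite big_cons IH; last by move=> a ain; apply: sub; rewrite /= inE ain orbT.
have yS : y.2 \in S by apply: sub; rewrite /= inE eqxx.
rewrite /coef.
under [RHS]eq_bigr => a _ do rewrite big_cons.
rewrite [RHS](eq_bigr (fun a => (if y.2 == a then y.1 else 0) + \sum_(j <- v | j.2 == a) j.1)); last first.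
  by move=> a _; case: ifP; rewrite ?add0r.
rewrite big_split /=.
case: ifP => hy; last first.
  rewrite [X in _ = X + _]big1 ?add0r // => a ha; case: eqP => // E.
  by move: hy; rewrite E ha.
congr (_ + _).
rewrite big_mkcond (bigD1_seq y.2) //= eqxx hy big1 ?addr0 // => a ne.
by case: ifP => // _; case: eqP => // E; move: ne; rewrite E eqxx.
Qed.

Lemma lmul_iota (K : fieldType) (v w : lc K pforest) :
  lmap iota_pf (lmul pprod v w) = lmul oprod (lmap iota_pf v) (lmap iota_pf w).
Proof.
elim: v => [|x v IH] //=; rewrite /lmap /lmul /= map_cat -/(lmap _ _) -/(lmul _ _ _).
rewrite -/(lmap iota_pf (lmul pprod v w)) IH; congr (_ ++ _).
by rewrite /lmap -!map_comp; apply: eq_map => y /=; rewrite prod_iota.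
Qed.

Lemma lcoprod_iota (K : fieldType) (v : lc K pforest) :
  lcoprod ocoprod (lmap iota_pf v) = lmap (tensor_map iota_pf) (lcoprod pcoprod v).
Proof.
elim: v => [|x v IH] //=; rewrite /lmap /lcoprod /= map_cat.
rewrite -/(lmap _ _) -/(lcoprod _ _) -/(lmap _ (lcoprod _ _)) -/(lcoprod _ _) IH; congr (_ ++ _).
by rewrite coprod_iota -!map_comp.
Qed.

Theorem mainTheorem5 (K : fieldType) :
  (forall f : pforest, ovalid (iota_pf f)) /\
  (forall (v w : lc K pforest),
      (forall f, coef v f = coef w f) ->
      forall p, coef (lmap iota_pf v) p = coef (lmap iota_pf w) p) /\
  (forall v : lc K pforest,
      (forall p, coef (lmap iota_pf v) p = 0) -> forall f, coef v f = 0) /\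
  (forall (v w : lc K pforest) (p : oforest),
      coef (lmap iota_pf (lmul pprod v w)) p =
      coef (lmul oprod (lmap iota_pf v) (lmap iota_pf w)) p) /\
  (forall p : oforest,
      coef (lmap iota_pf (lunit K ([::] : pforest))) p =
      coef (lunit K ([::] : oforest)) p) /\
  (forall (v : lc K pforest) (pq : oforest * oforest),
      coef (lcoprod ocoprod (lmap iota_pf v)) pq =
      coef (lmap (tensor_map iota_pf) (lcoprod pcoprod v)) pq) /\
  (forall v : lc K pforest,
      lcounit ocounit (lmap iota_pf v) = lcounit pcounit v).
Proof.
split; first exact: ovalid_iota.
split.
  move=> v w H p; rewrite !coef_lmap.
  set S := undup (map snd (v ++ w)).
  have uS : uniq S by apply: undup_uniq.
  rewrite (coef_part _ _ uS); last by move=> a ain; rewrite mem_undup map_cat mem_cat ain.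
  rewrite (coef_part _ _ uS); last by move=> a ain; rewrite mem_undup map_cat mem_cat ain orbT.
  by apply: eq_bigr => a _; rewrite H.
split.
  move=> v H f; rewrite -(H (iota_pf f)) coef_lmap /coef.
  by apply: eq_bigl => x; rewrite (inj_eq iota_inj).
split; first by move=> v w p; rewrite lmul_iota.
split; first by [].
split; first by move=> v pq; rewrite lcoprod_iota.
move=> v; rewrite /lcounit /lmap big_map; apply: eq_bigr => x _.
by rewrite /ocounit /pcounit /= iota_nil.
Qed.
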